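(* Let $\mathcal{T}=[t_{i,j,k}]\in\mathrm{Sym}(2,3)$. If $\mathcal{T}$ has a best rank one approximation that is not symmetric, then $\mathcal{T}$ is a nonzero scalar multiple of the tensor $\mathcal{T}_\theta\in\mathrm{Sym}(2,3)$ with entries $t_{1,1,1}=\cos\theta$, $t_{1,1,2}=\sin\theta$, $t_{1,2,2}=-\cos\theta$, $t_{2,2,2}=-\sin\theta$ (the remaining entries determined by symmetry) for some $\theta\in[0,2\pi)$. Moreover, for $\mathcal{T}=\mathcal{T}_\theta$: for arbitrary $\mathbf{u},\mathbf{v}\in\mathrm{S}^1$ there is a vector $\mathbf{w}(\mathbf{u},\mathbf{v})\in\mathrm{S}^1$, uniquely determined by $\mathbf{u},\mathbf{v}$, such that $\mathbf{u}\otimes\mathbf{v}\otimes\mathbf{w}(\mathbf{u},\mathbf{v})$ is a best rank one approximation of $\mathcal{T}_\theta$; and $\mathcal{T}_\theta$ has exactly three (distinct) symmetric best rank one approximations.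
   Context: $\mathrm{Sym}(2,3)$ is the space of real tensors $[t_{i,j,k}]_{i,j,k=1}^2$ invariant under all permutations of indices. $\mathrm{S}^1$ is the unit circle in $\mathbb{R}^2$. Inner product $\langle\mathcal{S},\mathcal{T}\rangle=\sum s_{i,j,k}t_{i,j,k}$, norm $\|\mathcal{T}\|=\sqrt{\langle\mathcal{T},\mathcal{T}\rangle}$. A best rank one approximation of $\mathcal{T}$ is a tensor $a\,\mathbf{x}\otimes\mathbf{y}\otimes\mathbf{z}$ ($a\in\mathbb{R}$, $\mathbf{x},\mathbf{y},\mathbf{z}\in\mathrm{S}^1$) minimizing $\|\mathcal{T}-s\,\mathbf{x}'\otimes\mathbf{y}'\otimes\mathbf{z}'\|$ over $s\in\mathbb{R}$, $\mathbf{x}',\mathbf{y}',\mathbf{z}'\in\mathrm{S}^1$. It is symmetric if it is a symmetric tensor, i.e. of the form $b\,\mathbf{u}\otimes\mathbf{u}\otimes\mathbf{u}$. *)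

(* Defs.v *)
From Stdlib Require Import Reals.
Open Scope R_scope.

Inductive idx : Set := i1 | i2.

Definition vec := idx -> R.
Definition tensor := idx -> idx -> idx -> R.

Definition sum2 (f : idx -> R) : R := f i1 + f i2.

Definition in_S1 (x : vec) : Prop := x i1 ^ 2 + x i2 ^ 2 = 1.

Definition is_sym (T : tensor) : Prop :=
  forall i j k,
    T i j k = T i k j /\ T i j k = T j i k /\ T i j k = T j k i /\
    T i j k = T k i j /\ T i j k = T k j i.

Definition inner (S T : tensor) : R :=
  sum2 (fun i => sum2 (fun j => sum2 (fun k => S i j k * T i j k))).

Definition tnorm (T : tensor) : R := sqrt (inner T T).

Definition tsub (S T : tensor) : tensor := fun i j k => S i j k - T i j k.

Definition tscale (c : R) (T : tensor) : tensor := fun i j k => c * T i j k.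

Definition rank1 (a : R) (x y z : vec) : tensor :=
  fun i j k => a * x i * y j * z k.

Definition best_rank1 (T B : tensor) : Prop :=
  (exists a x y z, in_S1 x /\ in_S1 y /\ in_S1 z /\ B = rank1 a x y z) /\
  (forall s x' y' z', in_S1 x' -> in_S1 y' -> in_S1 z' ->
     tnorm (tsub T B) <= tnorm (tsub T (rank1 s x' y' z'))).

Definition Ttheta (theta : R) : tensor :=
  fun i j k =>
    match i, j, k with
    | i1, i1, i1 => cos theta
    | i1, i1, i2 | i1, i2, i1 | i2, i1, i1 => sin theta
    | i1, i2, i2 | i2, i1, i2 | i2, i2, i1 => - cos theta
    | i2, i2, i2 => - sin theta
    end.

(* Main.v *)
Require Import Defs.
From Stdlib Require Import Reals Lra Psatz FunctionalExtensionality Classical.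
Open Scope R_scope.

Definition F (a b c d x1 x2 y1 y2 z1 z2 : R) : R :=
  a*x1*y1*z1 + b*(x1*y1*z2 + x1*y2*z1 + x2*y1*z1)
  + c*(x1*y2*z2 + x2*y1*z2 + x2*y2*z1) + d*x2*y2*z2.

Definition Bound (a b c d K : R) : Prop :=
  forall p1 p2 q1 q2 r1 r2,
    (F a b c d p1 p2 q1 q2 r1 r2)^2 <= K*(p1^2+p2^2)*(q1^2+q2^2)*(r1^2+r2^2).

Lemma lin0 : forall al be, (forall e, 0 <= al*e + be*e*e) -> al = 0.
Proof.
  intros al be H. destruct (Req_dec al 0) as [|Hn]; auto.
  exfalso. set (D := be^2+1). assert (HD : 0 < D) by (unfold D; nra).
  specialize (H (- al / (2*D))).
  assert (E : al * (- al / (2*D)) + be * (- al / (2*D)) * (- al / (2*D))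
             = al^2 * (be - 2*D) / (4*D^2)) by (field; lra).
  rewrite E in H.
  assert (Hal : 0 < al^2) by nra.
  assert (Hneg : be - 2*D < 0) by (unfold D; nra).
  assert (0 < 4*D^2) by nra.
  assert (al^2 * (be - 2*D) < 0) by nra.
  assert (al ^ 2 * (be - 2 * D) / (4 * D ^ 2) < 0).
  { unfold Rdiv. apply Rmult_neg_pos; auto. apply Rinv_0_lt_compat; lra. }
  lra.
Qed.

Lemma FO1 : forall a b c d K p1 p2 q1 q2 r1 r2,
  Bound a b c d K ->
  (F a b c d p1 p2 q1 q2 r1 r2)^2 = K*(p1^2+p2^2)*(q1^2+q2^2)*(r1^2+r2^2) ->
  forall u1 u2, K*(p1*u1+p2*u2)*(q1^2+q2^2)*(r1^2+r2^2)
     = F a b c d p1 p2 q1 q2 r1 r2 * F a b c d u1 u2 q1 q2 r1 r2.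
Proof.
  intros a b c d K p1 p2 q1 q2 r1 r2 HB HA u1 u2.
  set (s := F a b c d p1 p2 q1 q2 r1 r2) in *.
  set (t := F a b c d u1 u2 q1 q2 r1 r2).
  set (Q := q1^2+q2^2). set (R := r1^2+r2^2).
  assert (2*(K*(p1*u1+p2*u2)*Q*R - s*t) = 0); [|lra].
  apply (lin0 _ (K*(u1^2+u2^2)*Q*R - t^2)).
  intro e. specialize (HB (p1+e*u1) (p2+e*u2) q1 q2 r1 r2).
  replace (F a b c d (p1+e*u1) (p2+e*u2) q1 q2 r1 r2) with (s + e*t) in HB
    by (unfold s, t, F; ring).
  fold Q R in HB.
  assert (E : K * ((p1 + e * u1) ^ 2 + (p2 + e * u2) ^ 2) * Q * R - (s+e*t)^2
     = (K*(p1^2+p2^2)*Q*R - s^2) + 2 * (K * (p1 * u1 + p2 * u2) * Q * R - s * t) * e +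
        (K * (u1 ^ 2 + u2 ^ 2) * Q * R - t ^ 2) * e * e) by ring.
  fold Q R in HA. lra.
Qed.

Lemma FO2 : forall a b c d K p1 p2 q1 q2 r1 r2,
  Bound a b c d K ->
  (F a b c d p1 p2 q1 q2 r1 r2)^2 = K*(p1^2+p2^2)*(q1^2+q2^2)*(r1^2+r2^2) ->
  forall u1 u2, K*(q1*u1+q2*u2)*(p1^2+p2^2)*(r1^2+r2^2)
     = F a b c d p1 p2 q1 q2 r1 r2 * F a b c d p1 p2 u1 u2 r1 r2.
Proof.
  intros a b c d K p1 p2 q1 q2 r1 r2 HB HA u1 u2.
  assert (S1 : forall x1 x2 y1 y2, F a b c d x1 x2 y1 y2 r1 r2 = F a b c d y1 y2 x1 x2 r1 r2)
    by (intros; unfold F; ring).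
  rewrite (S1 p1 p2 q1 q2), (S1 p1 p2 u1 u2).
  apply FO1; auto. rewrite <- S1, HA. ring.
Qed.

Lemma KL : forall a b c d K x1 x2 y1 y2 z1 z2,
  Bound a b c d K ->
  (F a b c d x1 x2 y1 y2 z1 z2)^2 = K*(x1^2+x2^2)*(y1^2+y2^2)*(z1^2+z2^2) ->
  F a b c d x1 x2 y1 y2 z1 z2 <> 0 -> x1*y2 - x2*y1 <> 0 ->
  (a+c)*z1 + (b+d)*z2 = 0.
Proof.
  intros a b c d K x1 x2 y1 y2 z1 z2 HB HA Hs Hd.
  pose proof (FO1 _ _ _ _ _ _ _ _ _ _ _ HB HA 1 0) as H1.
  pose proof (FO1 _ _ _ _ _ _ _ _ _ _ _ HB HA 0 1) as H2.
  pose proof (FO2 _ _ _ _ _ _ _ _ _ _ _ HB HA 1 0) as H3.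
  pose proof (FO2 _ _ _ _ _ _ _ _ _ _ _ HB HA 0 1) as H4.
  assert (E : F a b c d x1 x2 y1 y2 z1 z2 * ((a+c)*z1 + (b+d)*z2) * (x1*y2 - x2*y1) =
     y2*(F a b c d x1 x2 y1 y2 z1 z2*F a b c d x1 x2 1 0 z1 z2) - y1*(F a b c d x1 x2 y1 y2 z1 z2*F a b c d x1 x2 0 1 z1 z2)
     + x1*(F a b c d x1 x2 y1 y2 z1 z2*F a b c d 0 1 y1 y2 z1 z2) - x2*(F a b c d x1 x2 y1 y2 z1 z2*F a b c d 1 0 y1 y2 z1 z2)).
  { unfold F. ring. }
  set (s := F a b c d x1 x2 y1 y2 z1 z2) in *.





  rewrite <- H1, <- H2, <- H3, <- H4 in E.
  assert (E2 : s * ((a+c)*z1 + (b+d)*z2) * (x1*y2 - x2*y1) = 0) by (rewrite E; ring).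
  apply Rmult_integral in E2. destruct E2 as [E2|E2]; [|contradiction].
  apply Rmult_integral in E2. destruct E2; [contradiction|auto].
Qed.

Lemma solve2 : forall t1 t2 z1 z2 e1 e2,
  t1*z1 + t2*z2 = 0 -> t1*e1 + t2*e2 = 0 -> e1*z2 - e2*z1 <> 0 -> t1 = 0 /\ t2 = 0.
Proof.
  intros t1 t2 z1 z2 e1 e2 H1 H2 Hd.
  assert (A1 : t1 * (e1*z2 - e2*z1) = 0) by (replace (t1 * (e1*z2 - e2*z1)) with (z2*(t1*e1+t2*e2) - e2*(t1*z1+t2*z2)) by ring; rewrite H1, H2; ring).
  assert (A2 : t2 * (e1*z2 - e2*z1) = 0) by (replace (t2 * (e1*z2 - e2*z1)) with (e1*(t1*z1+t2*z2) - z1*(t1*e1+t2*e2)) by ring; rewrite H1, H2; ring).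
  apply Rmult_integral in A1; apply Rmult_integral in A2; intuition.
Qed.

Lemma ML : forall a b c d x1 x2 y1 y2 z1 z2,
  Bound a b c d ((F a b c d x1 x2 y1 y2 z1 z2)^2) ->
  x1^2+x2^2 = 1 -> y1^2+y2^2 = 1 -> z1^2+z2^2 = 1 ->
  F a b c d x1 x2 y1 y2 z1 z2 <> 0 -> x1*y2 - x2*y1 <> 0 ->
  a + c = 0 /\ b + d = 0.
Proof.
  intros a b c d x1 x2 y1 y2 z1 z2 HB Hx Hy Hz Hs Hd.
  set (s := F a b c d x1 x2 y1 y2 z1 z2) in *.
  assert (HA : s^2 = s^2*(x1^2+x2^2)*(y1^2+y2^2)*(z1^2+z2^2)) by (rewrite Hx, Hy, Hz; ring).
  assert (Hz0 := KL a b c d (s^2) x1 x2 y1 y2 z1 z2 HB HA Hs Hd).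
  pose proof (FO1 _ _ _ _ _ _ _ _ _ _ _ HB HA 1 0) as H1.
  pose proof (FO1 _ _ _ _ _ _ _ _ _ _ _ HB HA 0 1) as H2.
  pose proof (FO2 _ _ _ _ _ _ _ _ _ _ _ HB HA 1 0) as H3.
  pose proof (FO2 _ _ _ _ _ _ _ _ _ _ _ HB HA 0 1) as H4.
  fold s in H1, H2, H3, H4. rewrite Hz in H1, H2, H3, H4. rewrite Hy in H1, H2. rewrite Hx in H3, H4.
  assert (My1 : F a b c d 1 0 y1 y2 z1 z2 = s*x1).
  { apply (Rmult_eq_reg_l s); auto. rewrite <- H1. ring. }
  assert (My2 : F a b c d 0 1 y1 y2 z1 z2 = s*x2).
  { apply (Rmult_eq_reg_l s); auto. rewrite <- H2. ring. }
  assert (Mx1 : F a b c d x1 x2 1 0 z1 z2 = s*y1).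
  { apply (Rmult_eq_reg_l s); auto. rewrite <- H3. ring. }
  assert (Mx2 : F a b c d x1 x2 0 1 z1 z2 = s*y2).
  { apply (Rmult_eq_reg_l s); auto. rewrite <- H4. ring. }
  assert (Hxyz : x1*y2 - x2*y1 = 0 -> False) by auto.
  assert (GEN : forall ep, (ep = 1 \/ ep = -1) ->
     forall e1 e2, e1 = x1 + ep*y1 -> e2 = x2 + ep*y2 ->
     e1*z2 - e2*z1 <> 0 -> (a+c)*e1 + (b+d)*e2 = 0).
  { intros ep Hep e1 e2 He1 He2 Hdz.
    assert (Fe : F a b c d e1 e2 z1 z2 e1 e2 = ep*s*(e1^2+e2^2)).
    { transitivity (e1*(F a b c d x1 x2 1 0 z1 z2 + ep * F a b c d 1 0 y1 y2 z1 z2)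
                  + e2*(F a b c d x1 x2 0 1 z1 z2 + ep * F a b c d 0 1 y1 y2 z1 z2)).
      { subst e1 e2. unfold F. ring. }
      rewrite My1, My2, Mx1, Mx2. subst e1 e2.
      destruct Hep as [-> | ->]; ring. }
    assert (Hne : e1^2+e2^2 <> 0).
    { intro H0. apply Hd. assert (e1 = 0) by nra. assert (e2 = 0) by nra.
      subst e1 e2. destruct Hep as [-> | ->]; nra. }
    assert (Hep2 : ep^2 = 1) by (destruct Hep as [-> | ->]; ring).
    apply (KL a b c d (s^2) e1 e2 z1 z2 e1 e2 HB).
    - rewrite Fe, Hz. replace ((ep*s*(e1^2+e2^2))^2) with (ep^2*s^2*(e1^2+e2^2)^2) by ring.
      rewrite Hep2. ring.
    - rewrite Fe. intro H0. apply Rmult_integral in H0. destruct H0 as [H0|H0]; [|contradiction].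
      apply Rmult_integral in H0. destruct H0 as [H0|H0]; [|contradiction].
      destruct Hep; subst; lra.
    - auto. }
  destruct (Req_dec ((x1+y1)*z2 - (x2+y2)*z1) 0) as [D1|D1].
  - destruct (Req_dec ((x1 + -1*y1)*z2 - (x2+ -1*y2)*z1) 0) as [D2|D2].
    + exfalso. apply Hd.
      assert (P1 : x1*z2 - x2*z1 = 0).
      { replace (x1*z2 - x2*z1) with ((((x1+y1)*z2 - (x2+y2)*z1) + ((x1 + -1*y1)*z2 - (x2+ -1*y2)*z1))/2) by field.
        rewrite D1, D2; field. }
      assert (P2 : y1*z2 - y2*z1 = 0).
      { replace (y1*z2 - y2*z1) with ((((x1+y1)*z2 - (x2+y2)*z1) - ((x1 + -1*y1)*z2 - (x2+ -1*y2)*z1))/2) by field.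
        rewrite D1, D2; field. }
      assert (Q1 : (x1*y2 - x2*y1)*z1 = 0).
      { replace ((x1*y2 - x2*y1)*z1) with (y1*(x1*z2 - x2*z1) - x1*(y1*z2 - y2*z1)) by ring.
        rewrite P1, P2; ring. }
      assert (Q2 : (x1*y2 - x2*y1)*z2 = 0).
      { replace ((x1*y2 - x2*y1)*z2) with (y2*(x1*z2 - x2*z1) - x2*(y1*z2 - y2*z1)) by ring.
        rewrite P1, P2; ring. }
      replace (x1*y2 - x2*y1) with ((x1*y2 - x2*y1)*(z1^2+z2^2)) by (rewrite Hz; ring).
      replace ((x1*y2 - x2*y1)*(z1^2+z2^2)) with (((x1*y2 - x2*y1)*z1)*z1 + ((x1*y2 - x2*y1)*z2)*z2) by ring.
      rewrite Q1, Q2; ring.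
    + apply (solve2 (a+c) (b+d) z1 z2 (x1 + -1*y1) (x2 + -1*y2)); auto.
      apply (GEN (-1)); auto.
  - apply (solve2 (a+c) (b+d) z1 z2 (x1 + y1) (x2 + y2)); auto.
    apply (GEN 1); auto; ring.
Qed.

Lemma sqrt_pos_sq : forall P, 0 < P -> exists n, 0 < n /\ n^2 = P.
Proof.
  intros P HP. exists (sqrt P). split. apply sqrt_lt_R0; auto.
  rewrite <- Rsqr_pow2. apply Rsqr_sqrt. lra.
Qed.

Lemma HomB : forall a b c d K,
  (forall x1 x2 y1 y2 z1 z2, x1^2+x2^2 = 1 -> y1^2+y2^2 = 1 -> z1^2+z2^2 = 1 ->
     (F a b c d x1 x2 y1 y2 z1 z2)^2 <= K) -> Bound a b c d K.
Proof.
  intros a b c d K H p1 p2 q1 q2 r1 r2.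
  destruct (Req_dec (p1^2+p2^2) 0) as [P0|P0].
  { assert (p1 = 0) by nra. assert (p2 = 0) by nra. subst.
    replace (F a b c d 0 0 q1 q2 r1 r2) with 0 by (unfold F; ring).
    right. ring. }
  destruct (Req_dec (q1^2+q2^2) 0) as [Q0|Q0].
  { assert (q1 = 0) by nra. assert (q2 = 0) by nra. subst.
    replace (F a b c d p1 p2 0 0 r1 r2) with 0 by (unfold F; ring).
    right. ring. }
  destruct (Req_dec (r1^2+r2^2) 0) as [R0|R0].
  { assert (r1 = 0) by nra. assert (r2 = 0) by nra. subst.
    replace (F a b c d p1 p2 q1 q2 0 0) with 0 by (unfold F; ring).
    right. ring. }
  destruct (sqrt_pos_sq (p1^2+p2^2)) as [n [Hn Hn2]]; [nra|].
  destruct (sqrt_pos_sq (q1^2+q2^2)) as [m [Hm Hm2]]; [nra|].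
  destruct (sqrt_pos_sq (r1^2+r2^2)) as [l [Hl Hl2]]; [nra|].
  specialize (H (p1/n) (p2/n) (q1/m) (q2/m) (r1/l) (r2/l)).
  replace (F a b c d (p1/n) (p2/n) (q1/m) (q2/m) (r1/l) (r2/l))
    with (F a b c d p1 p2 q1 q2 r1 r2 / (n*m*l)) in H by (unfold F; field; lra).
  rewrite <- Hn2, <- Hm2, <- Hl2.
  assert (E1 : (p1/n)^2 + (p2/n)^2 = 1) by (replace ((p1/n)^2 + (p2/n)^2) with ((p1^2+p2^2)/n^2) by (field; lra); rewrite <- Hn2; field; lra).
  assert (E2 : (q1/m)^2 + (q2/m)^2 = 1) by (replace ((q1/m)^2 + (q2/m)^2) with ((q1^2+q2^2)/m^2) by (field; lra); rewrite <- Hm2; field; lra).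
  assert (E3 : (r1/l)^2 + (r2/l)^2 = 1) by (replace ((r1/l)^2 + (r2/l)^2) with ((r1^2+r2^2)/l^2) by (field; lra); rewrite <- Hl2; field; lra).
  specialize (H E1 E2 E3).
  set (f := F a b c d p1 p2 q1 q2 r1 r2) in *.
  replace ((f / (n*m*l))^2) with (f^2 / (n^2*m^2*l^2)) in H by (field; lra).
  assert (0 < n^2*m^2*l^2) by (apply Rmult_lt_0_compat; [apply Rmult_lt_0_compat|]; nra).
  apply Rmult_le_compat_r with (r := n^2*m^2*l^2) in H; [|lra].
  replace (f ^ 2 / (n ^ 2 * m ^ 2 * l ^ 2) * (n ^ 2 * m ^ 2 * l ^ 2)) with (f^2) in H by (field; lra).
  lra.
Qed.

Definition Gt (T : tensor) (x y z : vec) : R :=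
  sum2 (fun i => sum2 (fun j => sum2 (fun k => T i j k * x i * y j * z k))).
Definition nrm (x : vec) : R := x i1 ^ 2 + x i2 ^ 2.

Lemma normsq : forall T s x y z,
  inner (tsub T (rank1 s x y z)) (tsub T (rank1 s x y z))
  = inner T T - 2*s*Gt T x y z + s^2 * (nrm x * nrm y * nrm z).
Proof. intros. unfold inner, tsub, rank1, Gt, nrm, sum2. ring. Qed.

Lemma inner_nonneg : forall S, 0 <= inner S S.
Proof.
  intros. unfold inner, sum2.
  repeat match goal with |- context [S ?i ?j ?k * S ?i ?j ?k] =>
    let H := fresh in assert (H := Rle_0_sqr (S i j k)); unfold Rsqr in H;
    set (S i j k * S i j k) in * end.
  lra.
Qed.

Lemma tn_le : forall A B, tnorm A <= tnorm B -> inner A A <= inner B B.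
Proof. intros A B H. apply sqrt_le_0; auto using inner_nonneg. Qed.

Lemma tn_le' : forall A B, inner A A <= inner B B -> tnorm A <= tnorm B.
Proof. intros A B H. apply sqrt_le_1_alt; auto. Qed.

Lemma G_sym : forall T x y z, is_sym T ->
  Gt T x y z = F (T i1 i1 i1) (T i1 i1 i2) (T i1 i2 i2) (T i2 i2 i2)
                 (x i1) (x i2) (y i1) (y i2) (z i1) (z i2).
Proof.
  intros T x y z HS.
  destruct (HS i1 i1 i2) as (A1&A2&A3&A4&A5).
  destruct (HS i1 i2 i2) as (B1&B2&B3&B4&B5).
  unfold Gt, sum2, F. rewrite <- A1, <- A4, <- B2, <- B3. ring.
Qed.

Definition mkv (x1 x2 : R) : vec := fun i => match i with i1 => x1 | i2 => x2 end.

Lemma angle : forall p q, p^2 + q^2 = 1 ->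
  exists th, 0 <= th < 2*PI /\ cos th = p /\ sin th = q.
Proof.
  intros p q H.
  assert (Hp : -1 <= p <= 1) by nra.
  assert (Hs : sqrt (1 - p²) = Rabs q).
  { replace (1 - p²) with (q²) by (unfold Rsqr; lra). apply sqrt_Rsqr_abs. }
  destruct (Rle_or_lt 0 q) as [Hq|Hq].
  - exists (acos p). pose proof (acos_bound p). pose proof PI_RGT_0.
    split; [lra|]. split. apply cos_acos; auto.
    rewrite sin_acos, Hs; auto. apply Rabs_right; lra.
  - assert (Hp' : -1 < p < 1) by nra.
    pose proof (acos_bound_lt p Hp'). pose proof PI_RGT_0.
    exists (2*PI - acos p). split; [lra|].
    rewrite cos_minus, sin_minus, cos_2PI, sin_2PI, cos_acos, sin_acos, Hs by auto.
    rewrite Rabs_left by auto. split; ring.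
Qed.

Lemma rank1_sym_of_par : forall a (x y z : vec), in_S1 x ->
  x i1 * y i2 - x i2 * y i1 = 0 -> x i1 * z i2 - x i2 * z i1 = 0 ->
  is_sym (rank1 a x y z).
Proof.
  intros a x y z Hx Dy Dz. unfold in_S1 in Hx.
  set (la := x i1 * y i1 + x i2 * y i2). set (mu := x i1 * z i1 + x i2 * z i2).
  assert (Hy : forall i, y i = la * x i).
  { intros []; unfold la.
    - transitivity (y i1 * (x i1 ^2 + x i2^2)); [rewrite Hx; ring|].
      replace (y i1 * (x i1 ^ 2 + x i2 ^ 2)) with ((x i1 * y i1 + x i2 * y i2) * x i1 - x i2 * (x i1 * y i2 - x i2 * y i1)) by ring.
      rewrite Dy; ring.
    - transitivity (y i2 * (x i1 ^2 + x i2^2)); [rewrite Hx; ring|].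
      replace (y i2 * (x i1 ^ 2 + x i2 ^ 2)) with ((x i1 * y i1 + x i2 * y i2) * x i2 + x i1 * (x i1 * y i2 - x i2 * y i1)) by ring.
      rewrite Dy; ring. }
  assert (Hz : forall i, z i = mu * x i).
  { intros []; unfold mu.
    - transitivity (z i1 * (x i1 ^2 + x i2^2)); [rewrite Hx; ring|].
      replace (z i1 * (x i1 ^ 2 + x i2 ^ 2)) with ((x i1 * z i1 + x i2 * z i2) * x i1 - x i2 * (x i1 * z i2 - x i2 * z i1)) by ring.
      rewrite Dz; ring.
    - transitivity (z i2 * (x i1 ^2 + x i2^2)); [rewrite Hx; ring|].
      replace (z i2 * (x i1 ^ 2 + x i2 ^ 2)) with ((x i1 * z i1 + x i2 * z i2) * x i2 + x i1 * (x i1 * z i2 - x i2 * z i1)) by ring.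
      rewrite Dz; ring. }
  intros i j k. unfold rank1. rewrite !Hy, !Hz. repeat split; ring.
Qed.

Lemma part1 : forall T : tensor, is_sym T ->
     (exists B, best_rank1 T B /\ ~ is_sym B) ->
     exists (c theta : R), c <> 0 /\ 0 <= theta < 2 * PI /\ T = tscale c (Ttheta theta).
Proof.
  intros T HS [B [[[a [x [y [z [Hx [Hy [Hz ->]]]]]]] Hopt] HnS]].
  set (ta := T i1 i1 i1). set (tb := T i1 i1 i2). set (tc := T i1 i2 i2). set (td := T i2 i2 i2).
  assert (HO : forall s x' y' z', in_S1 x' -> in_S1 y' -> in_S1 z' ->
     inner T T - 2*a*Gt T x y z + a^2 <= inner T T - 2*s*Gt T x' y' z' + s^2).
  { intros s x' y' z' H1 H2 H3. specialize (Hopt s x' y' z' H1 H2 H3).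
    apply tn_le in Hopt. rewrite !normsq in Hopt. unfold nrm in Hopt.
    unfold in_S1 in *. rewrite Hx, Hy, Hz, H1, H2, H3 in Hopt. lra. }
  set (t := Gt T x y z) in *.
  assert (Hat : a = t).
  { specialize (HO t x y z Hx Hy Hz). fold t in HO. nra. }
  subst a.
  assert (UB : forall x' y' z', in_S1 x' -> in_S1 y' -> in_S1 z' -> (Gt T x' y' z')^2 <= t^2).
  { intros x' y' z' H1 H2 H3. specialize (HO (Gt T x' y' z') x' y' z' H1 H2 H3). lra. }
  assert (HtF : t = F ta tb tc td (x i1) (x i2) (y i1) (y i2) (z i1) (z i2)) by (apply G_sym; auto).
  assert (HB : Bound ta tb tc td ((F ta tb tc td (x i1) (x i2) (y i1) (y i2) (z i1) (z i2))^2)).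
  { apply HomB. intros x1 x2 y1 y2 z1 z2 H1 H2 H3. rewrite <- HtF.
    specialize (UB (mkv x1 x2) (mkv y1 y2) (mkv z1 z2) H1 H2 H3).
    rewrite G_sym in UB by auto. exact UB. }
  assert (Ht0 : t <> 0).
  { intro H0. apply HnS. rewrite H0. intros i j k. unfold rank1. repeat split; ring. }
  unfold in_S1 in Hx, Hy, Hz.
  assert (Hac : ta + tc = 0 /\ tb + td = 0).
  { destruct (Req_dec (x i1 * y i2 - x i2 * y i1) 0) as [Dy|Dy].
    - destruct (Req_dec (x i1 * z i2 - x i2 * z i1) 0) as [Dz|Dz].
      + exfalso. apply HnS. apply rank1_sym_of_par; auto.
      + apply (ML ta tb tc td (x i1) (x i2) (z i1) (z i2) (y i1) (y i2)); auto.
        * replace (F ta tb tc td (x i1) (x i2) (z i1) (z i2) (y i1) (y i2))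
            with (F ta tb tc td (x i1) (x i2) (y i1) (y i2) (z i1) (z i2)) by (unfold F; ring).
          auto.
        * replace (F ta tb tc td (x i1) (x i2) (z i1) (z i2) (y i1) (y i2))
            with (F ta tb tc td (x i1) (x i2) (y i1) (y i2) (z i1) (z i2)) by (unfold F; ring).
          rewrite <- HtF; auto.
    - apply (ML ta tb tc td (x i1) (x i2) (y i1) (y i2) (z i1) (z i2)); auto.
      rewrite <- HtF; auto. }
  destruct Hac as [Hac Hbd].
  assert (Hab : 0 < ta^2 + tb^2).
  { destruct (Req_dec (ta^2+tb^2) 0) as [E|E]; [|nra].
    exfalso. apply Ht0. assert (ta = 0) by nra. assert (tb = 0) by nra.
    assert (tc = 0) by lra. assert (td = 0) by lra.
    rewrite HtF. unfold F. rewrite H, H0, H1, H2. ring. }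
  destruct (sqrt_pos_sq _ Hab) as [r [Hr Hr2]].
  destruct (angle (ta/r) (tb/r)) as [th [Hth [Hc Hs]]].
  { replace ((ta/r)^2 + (tb/r)^2) with ((ta^2+tb^2)/r^2) by (field; lra).
    rewrite Hr2. field. lra. }
  exists r, th. split; [lra|]. split; [auto|].
  destruct (HS i1 i1 i2) as (A1&A2&A3&A4&A5).
  destruct (HS i1 i2 i2) as (B1&B2&B3&B4&B5).
  apply functional_extensionality; intro i.
  apply functional_extensionality; intro j.
  apply functional_extensionality; intro k.
  assert (E2 : T i1 i1 i2 = tb) by auto.
  assert (E3 : T i1 i2 i1 = tb) by congruence.
  assert (E4 : T i2 i1 i1 = tb) by congruence.
  assert (E5 : T i1 i2 i2 = - ta) by (unfold tc in Hac; lra).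
  assert (E6 : T i2 i1 i2 = - ta) by congruence.
  assert (E7 : T i2 i2 i1 = - ta) by congruence.
  assert (E8 : T i2 i2 i2 = - tb) by (unfold td in Hbd; lra).
  unfold tscale, Ttheta.
  destruct i, j, k; rewrite ?Hc, ?Hs, ?E2, ?E3, ?E4, ?E5, ?E6, ?E7, ?E8; fold ta; field; lra.
Qed.

Lemma Gth : forall th x y z, Gt (Ttheta th) x y z =
  F (cos th) (sin th) (- cos th) (- sin th) (x i1) (x i2) (y i1) (y i2) (z i1) (z i2).
Proof. intros. unfold Gt, sum2, Ttheta, F. ring. Qed.

Lemma NTh : forall th, inner (Ttheta th) (Ttheta th) = 4.
Proof.
  intros. pose proof (sin2_cos2 th). unfold Rsqr in H. unfold inner, sum2, Ttheta. nra.
Qed.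

Lemma wid : forall C S x1 x2 y1 y2, (F C S (-C) (-S) x1 x2 y1 y2 1 0)^2 + (F C S (-C) (-S) x1 x2 y1 y2 0 1)^2 = (C^2+S^2)*(x1^2+x2^2)*(y1^2+y2^2).
Proof. intros; unfold F; ring. Qed.

Lemma thB : forall C S x1 x2 y1 y2 z1 z2, C^2+S^2 = 1 ->
  x1^2+x2^2 = 1 -> y1^2+y2^2 = 1 -> z1^2+z2^2 = 1 ->
  (F C S (-C) (-S) x1 x2 y1 y2 z1 z2)^2 <= 1.
Proof.
  intros C S x1 x2 y1 y2 z1 z2 H Hx Hy Hz.
  pose proof (wid C S x1 x2 y1 y2) as W. rewrite H, Hx, Hy in W.
  set (w1 := F C S (-C) (-S) x1 x2 y1 y2 1 0) in *.
  set (w2 := F C S (-C) (-S) x1 x2 y1 y2 0 1) in *.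
  replace (F C S (-C) (-S) x1 x2 y1 y2 z1 z2) with (w1*z1 + w2*z2) by (unfold w1, w2, F; ring).
  assert (L : (w1*z1+w2*z2)^2 + (w1*z2 - w2*z1)^2 = (w1^2+w2^2)*(z1^2+z2^2)) by ring.
  rewrite W, Hz in L. pose proof (pow2_ge_0 (w1*z2 - w2*z1)). lra.
Qed.

Lemma cs1 : forall th, cos th ^2 + sin th ^2 = 1.
Proof. intros. pose proof (sin2_cos2 th). unfold Rsqr in H. nra. Qed.

Lemma GthB : forall th x y z, in_S1 x -> in_S1 y -> in_S1 z -> (Gt (Ttheta th) x y z)^2 <= 1.
Proof. intros. rewrite Gth. apply thB; auto using cs1. Qed.

Lemma best_th : forall th x y z, in_S1 x -> in_S1 y -> in_S1 z ->
  Gt (Ttheta th) x y z = 1 -> best_rank1 (Ttheta th) (rank1 1 x y z).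
Proof.
  intros th x y z Hx Hy Hz HG. split.
  - exists 1, x, y, z; auto.
  - intros s x' y' z' H1 H2 H3. apply tn_le'. rewrite !normsq, NTh. unfold nrm.
    unfold in_S1 in *. rewrite Hx, Hy, Hz, H1, H2, H3, HG.
    pose proof (GthB th x' y' z' H1 H2 H3).
    set (g := Gt (Ttheta th) x' y' z') in *. pose proof (pow2_ge_0 (s-g)). nra.
Qed.

Lemma cube_inj : forall a b, a^3 = b^3 -> a = b.
Proof.
  intros a b H. destruct (Req_dec a b) as [|N]; auto. exfalso.
  assert (E : (a-b)*(a^2+a*b+b^2) = 0) by (replace ((a-b)*(a^2+a*b+b^2)) with (a^3-b^3) by ring; lra).
  apply Rmult_integral in E. destruct E as [E|E]; [lra|].
  assert (E2 : (2*a+b)^2 + 3*b^2 = 0) by (replace ((2*a+b)^2 + 3*b^2) with (4*(a^2+a*b+b^2)) by ring; rewrite E; ring).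
  pose proof (pow2_ge_0 (2*a+b)). pose proof (pow2_ge_0 b).
  assert (b^2 = 0) by lra. assert ((2*a+b)^2 = 0) by lra.
  assert (b = 0) by (destruct (Req_dec b 0); auto; exfalso; apply (pow_nonzero b 2); auto).
  assert (2*a+b = 0) by (destruct (Req_dec (2*a+b) 0); auto; exfalso; apply (pow_nonzero (2*a+b) 2); auto).
  lra.
Qed.

Lemma r1_inj : forall p q : vec, rank1 1 p p p = rank1 1 q q q -> p i1 = q i1 /\ p i2 = q i2.
Proof.
  intros p q E.
  pose proof (f_equal (fun T => T i1 i1 i1) E) as E1.
  pose proof (f_equal (fun T => T i2 i2 i2) E) as E2.
  unfold rank1 in E1, E2; simpl in E1, E2.
  split; apply cube_inj; lra.
Qed.

Lemma par : forall x y : vec, in_S1 x -> x i1 * y i2 - x i2 * y i1 = 0 ->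
  forall i, y i = (x i1 * y i1 + x i2 * y i2) * x i.
Proof.
  intros x y Hx Dy. unfold in_S1 in Hx. intros [].
  - transitivity (y i1 * (x i1 ^2 + x i2^2)); [rewrite Hx; ring|].
    replace (y i1 * (x i1 ^ 2 + x i2 ^ 2)) with ((x i1 * y i1 + x i2 * y i2) * x i1 - x i2 * (x i1 * y i2 - x i2 * y i1)) by ring.
    rewrite Dy; ring.
  - transitivity (y i2 * (x i1 ^2 + x i2^2)); [rewrite Hx; ring|].
    replace (y i2 * (x i1 ^ 2 + x i2 ^ 2)) with ((x i1 * y i1 + x i2 * y i2) * x i2 + x i1 * (x i1 * y i2 - x i2 * y i1)) by ring.
    rewrite Dy; ring.
Qed.

Lemma classify : forall c s r3 v1 v2, c^2+s^2 = 1 -> r3^2 = 3 -> v1^2+v2^2 = 1 ->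
  (v1*c+v2*s)^3 - 3*(v1*c+v2*s)*(v2*c-v1*s)^2 = 1 ->
  (v1 = c /\ v2 = s) \/ (v1 = -c/2 - r3*s/2 /\ v2 = -s/2 + r3*c/2)
  \/ (v1 = -c/2 + r3*s/2 /\ v2 = -s/2 - r3*c/2).
Proof.
  intros c s r3 v1 v2 Hcs Hr Hv H.
  set (p1 := v1*c+v2*s) in *. set (p2 := v2*c-v1*s) in *.
  assert (Hp : p1^2+p2^2 = 1).
  { replace (p1^2+p2^2) with ((v1^2+v2^2)*(c^2+s^2)) by (unfold p1, p2; ring). rewrite Hv, Hcs; ring. }
  assert (V1 : v1 = p1*c - p2*s).
  { transitivity (v1*(c^2+s^2)); [rewrite Hcs; ring|unfold p1, p2; ring]. }
  assert (V2 : v2 = p1*s + p2*c).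
  { transitivity (v2*(c^2+s^2)); [rewrite Hcs; ring|unfold p1, p2; ring]. }
  clearbody p1 p2.
  assert (E : (p1 - 1)*((2*p1+1)^2) = 0).
  { replace ((p1 - 1)*((2*p1+1)^2)) with ((p1^3 - 3*p1*p2^2 - 1) + 3*p1*(p1^2+p2^2 - 1)) by ring.
    rewrite H, Hp. ring. }
  apply Rmult_integral in E. destruct E as [E|E].
  - left. assert (p1 = 1) by lra. subst p1. assert (p2 = 0) by nra. subst p2.
    split; [rewrite V1|rewrite V2]; ring.
  - right. assert (p1 = -1/2) by nra. subst p1.
    assert (E2 : (p2 - r3/2)*(p2 + r3/2) = 0) by nra.
    apply Rmult_integral in E2. destruct E2 as [E2|E2].
    + left. assert (p2 = r3/2) by lra. subst p2. split; [rewrite V1|rewrite V2]; field.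
    + right. assert (p2 = -(r3/2)) by lra. subst p2. split; [rewrite V1|rewrite V2]; field.
Qed.

Lemma part2a : forall th (u v : vec), in_S1 u -> in_S1 v ->
  exists! w : vec, in_S1 w /\ best_rank1 (Ttheta th) (rank1 1 u v w).
Proof.
  intros th u v Hu Hv.
  set (C := cos th). set (S := sin th).
  set (w1 := F C S (-C) (-S) (u i1) (u i2) (v i1) (v i2) 1 0).
  set (w2 := F C S (-C) (-S) (u i1) (u i2) (v i1) (v i2) 0 1).
  pose proof (wid C S (u i1) (u i2) (v i1) (v i2)) as W. fold w1 w2 in W.
  unfold in_S1 in Hu, Hv. rewrite Hu, Hv in W. unfold C, S in W. rewrite (cs1 th) in W.
  assert (Hw : in_S1 (mkv w1 w2)) by (unfold in_S1, mkv; lra).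
  assert (HG : forall z : vec, Gt (Ttheta th) u v z = w1 * z i1 + w2 * z i2)
    by (intros; rewrite Gth; unfold w1, w2, F; fold C S; ring).
  exists (mkv w1 w2). split.
  - split; auto. apply best_th; auto. rewrite HG. simpl. lra.
  - intros w' [Hw' [_ Hb]].
    specialize (Hb 1 u v (mkv w1 w2) Hu Hv Hw). apply tn_le in Hb.
    rewrite !normsq, !HG in Hb. unfold nrm in Hb. unfold in_S1 in Hw, Hw'.
    rewrite Hu, Hv, Hw, Hw' in Hb. simpl in Hb, Hw.
    assert (D : (w1 - w' i1)^2 + (w2 - w' i2)^2 <= 0) by nra.
    pose proof (pow2_ge_0 (w1 - w' i1)). pose proof (pow2_ge_0 (w2 - w' i2)).
    assert (Z1 : w1 - w' i1 = 0) by (destruct (Req_dec (w1 - w' i1) 0); auto; exfalso; apply (pow_nonzero _ 2) in H1; lra).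
    assert (Z2 : w2 - w' i2 = 0) by (destruct (Req_dec (w2 - w' i2) 0); auto; exfalso; apply (pow_nonzero _ 2) in H1; lra).
    apply functional_extensionality. intros []; simpl; lra.
Qed.

Lemma cube_th : forall th x1 x2,
  F (cos th) (sin th) (- cos th) (- sin th) x1 x2 x1 x2 x1 x2 =
  (x1*cos (th/3)+x2*sin (th/3))^3 - 3*(x1*cos (th/3)+x2*sin (th/3))*(x2*cos (th/3)-x1*sin (th/3))^2.
Proof.
  intros th x1 x2.
  assert (Eth : th = 2*(th/3) + th/3) by field.
  assert (EC : cos th = cos (th/3)^3 - 3*cos (th/3)*sin (th/3)^2).
  { rewrite Eth at 1. rewrite cos_plus, cos_2a, sin_2a. ring. }
  assert (ES : sin th = 3*cos (th/3)^2*sin (th/3) - sin (th/3)^3).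
  { rewrite Eth at 1. rewrite sin_plus, cos_2a, sin_2a. ring. }
  rewrite EC, ES. unfold F. ring.
Qed.

Lemma part2b : forall th,
     (exists B1 B2 B3 : tensor,
        B1 <> B2 /\ B1 <> B3 /\ B2 <> B3 /\
        best_rank1 (Ttheta th) B1 /\ is_sym B1 /\
        best_rank1 (Ttheta th) B2 /\ is_sym B2 /\
        best_rank1 (Ttheta th) B3 /\ is_sym B3 /\
        (forall B, best_rank1 (Ttheta th) B -> is_sym B ->
           B = B1 \/ B = B2 \/ B = B3)).
Proof.
  intros th.
  set (c := cos (th/3)). set (s := sin (th/3)). set (r3 := sqrt 3).
  assert (Hcs : c^2 + s^2 = 1) by apply cs1.
  assert (Hr : r3^2 = 3) by (unfold r3; rewrite <- Rsqr_pow2; apply Rsqr_sqrt; lra).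
  set (u0 := mkv c s).
  set (u1 := mkv (-c/2 - r3*s/2) (-s/2 + r3*c/2)).
  set (u2 := mkv (-c/2 + r3*s/2) (-s/2 - r3*c/2)).
  assert (U0 : in_S1 u0) by (unfold in_S1, u0, mkv; lra).
  assert (U1 : in_S1 u1).
  { unfold in_S1, u1, mkv.
    replace ((- c / 2 - r3 * s / 2) ^ 2 + (- s / 2 + r3 * c / 2) ^ 2) with ((c^2+s^2)*(1+r3^2)/4) by field.
    rewrite Hcs, Hr. field. }
  assert (U2 : in_S1 u2).
  { unfold in_S1, u2, mkv.
    replace ((- c / 2 + r3 * s / 2) ^ 2 + (- s / 2 - r3 * c / 2) ^ 2) with ((c^2+s^2)*(1+r3^2)/4) by field.
    rewrite Hcs, Hr. field. }
  assert (GG : forall u : vec, Gt (Ttheta th) u u u =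
     (u i1*c+u i2*s)^3 - 3*(u i1*c+u i2*s)*(u i2*c-u i1*s)^2)
    by (intros; rewrite Gth; apply cube_th).
  assert (G0 : Gt (Ttheta th) u0 u0 u0 = 1).
  { rewrite GG. unfold u0, mkv.
    replace (c*c+s*s) with (c^2+s^2) by ring. rewrite Hcs.
    replace (s*c - c*s) with 0 by ring. ring. }
  assert (G1 : Gt (Ttheta th) u1 u1 u1 = 1).
  { rewrite GG. unfold u1, mkv.
    replace ((- c / 2 - r3 * s / 2) * c + (- s / 2 + r3 * c / 2) * s) with (-(c^2+s^2)/2) by field.
    replace ((- s / 2 + r3 * c / 2) * c - (- c / 2 - r3 * s / 2) * s) with (r3*(c^2+s^2)/2) by field.
    rewrite Hcs. transitivity (-1/8 + 3/8 * r3^2); [field|rewrite Hr; field]. }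
  assert (G2 : Gt (Ttheta th) u2 u2 u2 = 1).
  { rewrite GG. unfold u2, mkv.
    replace ((- c / 2 + r3 * s / 2) * c + (- s / 2 - r3 * c / 2) * s) with (-(c^2+s^2)/2) by field.
    replace ((- s / 2 - r3 * c / 2) * c - (- c / 2 + r3 * s / 2) * s) with (-(r3*(c^2+s^2)/2)) by field.
    rewrite Hcs. transitivity (-1/8 + 3/8 * r3^2); [field|rewrite Hr; field]. }
  assert (SY : forall u : vec, is_sym (rank1 1 u u u))
    by (intros u i j k; unfold rank1; repeat split; ring).
  exists (rank1 1 u0 u0 u0), (rank1 1 u1 u1 u1), (rank1 1 u2 u2 u2).
  split; [|split; [|split]].
  { intro E. apply r1_inj in E. unfold u0, u1, mkv in E. destruct E as [E1 E2].
    assert (A : 3*c = - r3 * s) by lra. assert (B : 3*s = r3*c) by lra.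
    assert (A2 : 9*c^2 = 3*s^2) by (replace (9*c^2) with ((3*c)^2) by ring; rewrite A;
       replace ((- r3 * s)^2) with (r3^2*s^2) by ring; rewrite Hr; ring).
    assert (B2 : 9*s^2 = 3*c^2) by (replace (9*s^2) with ((3*s)^2) by ring; rewrite B;
       replace ((r3 * c)^2) with (r3^2*c^2) by ring; rewrite Hr; ring).
    lra. }
  { intro E. apply r1_inj in E. unfold u0, u2, mkv in E. destruct E as [E1 E2].
    assert (A : 3*c = r3 * s) by lra. assert (B : 3*s = - r3*c) by lra.
    assert (A2 : 9*c^2 = 3*s^2) by (replace (9*c^2) with ((3*c)^2) by ring; rewrite A;
       replace ((r3 * s)^2) with (r3^2*s^2) by ring; rewrite Hr; ring).
    assert (B2 : 9*s^2 = 3*c^2) by (replace (9*s^2) with ((3*s)^2) by ring; rewrite B;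
       replace ((- r3 * c)^2) with (r3^2*c^2) by ring; rewrite Hr; ring).
    lra. }
  { intro E. apply r1_inj in E. unfold u1, u2, mkv in E. destruct E as [E1 E2].
    assert (A : r3 * s = 0) by lra. assert (B : r3*c = 0) by lra.
    assert (A2 : 3*s^2 = 0) by (rewrite <- Hr; replace (r3^2*s^2) with ((r3*s)^2) by ring; rewrite A; ring).
    assert (B2 : 3*c^2 = 0) by (rewrite <- Hr; replace (r3^2*c^2) with ((r3*c)^2) by ring; rewrite B; ring).
    lra. }
  split; [apply best_th; auto|]. split; [auto|].
  split; [apply best_th; auto|]. split; [auto|].
  split; [apply best_th; auto|]. split; [auto|].
  intros B [[a [x [y [z [Hx [Hy [Hz ->]]]]]]] Hopt] HS.
  assert (HO : forall s' x' y' z', in_S1 x' -> in_S1 y' -> in_S1 z' ->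
     4 - 2*a*Gt (Ttheta th) x y z + a^2 <= 4 - 2*s'*Gt (Ttheta th) x' y' z' + s'^2).
  { intros s' x' y' z' H1 H2 H3. specialize (Hopt s' x' y' z' H1 H2 H3).
    apply tn_le in Hopt. rewrite !normsq, NTh in Hopt. unfold nrm in Hopt.
    unfold in_S1 in *. rewrite Hx, Hy, Hz, H1, H2, H3 in Hopt. lra. }
  set (g := Gt (Ttheta th) x y z) in *.
  assert (Hag : a = g) by (specialize (HO g x y z Hx Hy Hz); fold g in HO; nra).
  subst a.
  assert (Hg2 : g^2 = 1).
  { pose proof (HO 1 u0 u0 u0 U0 U0 U0). rewrite G0 in H.
    pose proof (GthB th x y z Hx Hy Hz). fold g in H0. nra. }
  assert (Hg0 : g <> 0) by (intro E; rewrite E in Hg2; lra).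
  assert (Dy : x i1 * y i2 - x i2 * y i1 = 0).
  { destruct (HS i1 i2 i1) as [_ [A _]]. destruct (HS i1 i2 i2) as [_ [B _]].
    unfold rank1 in A, B.
    assert (A' : g * ((x i1 * y i2 - x i2 * y i1) * z i1) = 0) by (rewrite <- (Rminus_diag_eq _ _ A); ring).
    assert (B' : g * ((x i1 * y i2 - x i2 * y i1) * z i2) = 0) by (rewrite <- (Rminus_diag_eq _ _ B); ring).
    apply Rmult_integral in A'. apply Rmult_integral in B'.
    destruct A' as [A'|A']; [contradiction|]. destruct B' as [B'|B']; [contradiction|].
    unfold in_S1 in Hz.
    replace (x i1 * y i2 - x i2 * y i1) with ((x i1 * y i2 - x i2 * y i1)*(z i1^2+z i2^2)) by (rewrite Hz; ring).
    replace ((x i1 * y i2 - x i2 * y i1)*(z i1^2+z i2^2)) with (((x i1 * y i2 - x i2 * y i1) * z i1)*z i1 + ((x i1 * y i2 - x i2 * y i1) * z i2) * z i2) by ring.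
    rewrite A', B'. ring. }
  assert (Dz : x i1 * z i2 - x i2 * z i1 = 0).
  { destruct (HS i1 i1 i2) as [_ [_ [_ [_ A]]]]. destruct (HS i1 i2 i2) as [_ [_ [_ [_ B]]]].
    unfold rank1 in A, B.
    assert (A' : g * ((x i1 * z i2 - x i2 * z i1) * y i1) = 0) by (rewrite <- (Rminus_diag_eq _ _ A); ring).
    assert (B' : g * ((x i1 * z i2 - x i2 * z i1) * y i2) = 0) by (rewrite <- (Rminus_diag_eq _ _ B); ring).
    apply Rmult_integral in A'. apply Rmult_integral in B'.
    destruct A' as [A'|A']; [contradiction|]. destruct B' as [B'|B']; [contradiction|].
    unfold in_S1 in Hy.
    replace (x i1 * z i2 - x i2 * z i1) with ((x i1 * z i2 - x i2 * z i1)*(y i1^2+y i2^2)) by (rewrite Hy; ring).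
    replace ((x i1 * z i2 - x i2 * z i1)*(y i1^2+y i2^2)) with (((x i1 * z i2 - x i2 * z i1) * y i1)*y i1 + ((x i1 * z i2 - x i2 * z i1) * y i2) * y i2) by ring.
    rewrite A', B'. ring. }
  pose proof (par x y Hx Dy) as Py. pose proof (par x z Hx Dz) as Pz.
  set (la := x i1 * y i1 + x i2 * y i2) in *. set (mu := x i1 * z i1 + x i2 * z i2) in *.
  assert (Hla : la^2 = 1).
  { unfold in_S1 in Hx, Hy. rewrite (Py i1), (Py i2) in Hy.
    replace (la^2) with (la^2*(x i1^2+x i2^2)) by (rewrite Hx; ring). rewrite <- Hy. ring. }
  assert (Hmu : mu^2 = 1).
  { unfold in_S1 in Hx, Hz. rewrite (Pz i1), (Pz i2) in Hz.
    replace (mu^2) with (mu^2*(x i1^2+x i2^2)) by (rewrite Hx; ring). rewrite <- Hz. ring. }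
  set (h := Gt (Ttheta th) x x x).
  assert (Hgh : g = la*mu*h).
  { unfold g, h. rewrite !Gth. rewrite (Py i1), (Py i2), (Pz i1), (Pz i2). unfold F. ring. }
  assert (Hh2 : h^2 = 1).
  { rewrite Hgh in Hg2. replace ((la*mu*h)^2) with (la^2*mu^2*h^2) in Hg2 by ring.
    rewrite Hla, Hmu in Hg2. lra. }
  set (v := mkv (h * x i1) (h * x i2)).
  assert (Hv : in_S1 v).
  { unfold in_S1, v, mkv. unfold in_S1 in Hx.
    replace ((h * x i1) ^ 2 + (h * x i2) ^ 2) with (h^2*(x i1^2+x i2^2)) by ring. rewrite Hh2, Hx. ring. }
  assert (HvG : Gt (Ttheta th) v v v = 1).
  { assert (E : Gt (Ttheta th) v v v = h^3 * h) by (unfold v, mkv, h; rewrite !Gth; simpl; unfold F; ring).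
    rewrite E. replace (h^3*h) with ((h^2)^2) by ring. rewrite Hh2. ring. }
  assert (HBv : rank1 g x y z = rank1 1 v v v).
  { apply functional_extensionality; intro i.
    apply functional_extensionality; intro j.
    apply functional_extensionality; intro k.
    unfold rank1. rewrite (Py j), (Pz k), Hgh.
    assert (Ev : forall l, v l = h * x l) by (intros []; reflexivity).
    rewrite !Ev.
    replace (la * mu * h * x i * (la * x j) * (mu * x k)) with (la^2 * mu^2 * h * x i * x j * x k) by ring.
    replace (1 * (h * x i) * (h * x j) * (h * x k)) with (h^2 * h * x i * x j * x k) by ring.
    rewrite Hla, Hmu, Hh2. ring. }
  rewrite HBv.
  rewrite GG in HvG. unfold in_S1 in Hv.
  destruct (classify c s r3 (v i1) (v i2) Hcs Hr Hv HvG) as [[E1 E2]|[[E1 E2]|[E1 E2]]];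
    [left|right; left|right; right];
    (assert (Ev : forall l, v l = (match l with i1 => v i1 | i2 => v i2 end)) by (intros []; reflexivity));
    apply functional_extensionality; intro i;
    apply functional_extensionality; intro j;
    apply functional_extensionality; intro k;
    unfold rank1; rewrite (Ev i), (Ev j), (Ev k);
    destruct i, j, k; rewrite ?E1, ?E2; reflexivity.
Qed.

Theorem theorem4p1 :
  (forall T : tensor, is_sym T ->
     (exists B, best_rank1 T B /\ ~ is_sym B) ->
     exists (c theta : R), c <> 0 /\ 0 <= theta < 2 * PI /\ T = tscale c (Ttheta theta))
  /\
  (forall theta : R, 0 <= theta < 2 * PI ->
     (forall u v : vec, in_S1 u -> in_S1 v ->
        exists! w : vec, in_S1 w /\ best_rank1 (Ttheta theta) (rank1 1 u v w))
     /\
     (exists B1 B2 B3 : tensor,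
        B1 <> B2 /\ B1 <> B3 /\ B2 <> B3 /\
        best_rank1 (Ttheta theta) B1 /\ is_sym B1 /\
        best_rank1 (Ttheta theta) B2 /\ is_sym B2 /\
        best_rank1 (Ttheta theta) B3 /\ is_sym B3 /\
        (forall B, best_rank1 (Ttheta theta) B -> is_sym B ->
           B = B1 \/ B = B2 \/ B = B3))).
Proof.
  split.
  - exact part1.
  - intros theta _. split.
    + apply part2a.
    + apply part2b.
Qed.
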